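(* Let $(F,t)\in U$ with $t\neq0$ and $Y=Y_{F,t}$. Then $\Gamma_1\cup\Gamma_2$ coincides with the locus in $F(Y)$ of lines on $Y$ passing through $p_0=[0,\dots,0,1]$.
   Context: $U=U_0\times\mathbb{A}^1$, where $U_0$ is the space of cubic forms $F(x_0,\dots,x_3)$ such that the curve cut out by $F$ on the quadric $x_0x_3=x_1x_2$ in $\mathbb{P}^3$ is smooth, avoids $[0,0,0,1]$, and is tangent with multiplicity $2$ to the lines $x_0=x_1=0$ and $x_0=x_2=0$. $Y_{F,t}\subset\mathbb{P}^5$ is $x_4^3-F(x_0,\dots,x_3)+x_5(x_0x_3-x_1x_2)+t\,x_0x_5^2=0$, and $F(Y)$ its Fano variety of lines. $C_i=(x_0=x_i=x_5=0)\cap(x_4^3=F)\subset\mathbb{P}^5$, $i=1,2$; for each $p\in C_i$ the line $\overline{p_0p}$ lies in $Y$, and $\Gamma_i\subset F(Y)$ denotes the image of the embedding $C_i\to F(Y)$, $p\mapsto\overline{p_0p}$. *)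

(* Defs.v *)
From HB Require Import structures.
From mathcomp Require Import all_boot all_order all_algebra.
From mathcomp Require Import mpoly.
Set Implicit Arguments. Unset Strict Implicit. Unset Printing Implicit Defensive.
Import Order.TTheory GRing.Theory Num.Theory.
Local Open Scope ring_scope.

Section Defs.
Variable K : closedFieldType.

Definition c4 (k : nat) : 'I_4 := inord k.
Definition c6 (k : nat) : 'I_6 := inord k.

Definition Qform : {mpoly K[4]} :=
  'X_(c4 0) * 'X_(c4 3) - 'X_(c4 1) * 'X_(c4 2).

Definition nonzero4 (x : 'I_4 -> K) := exists i, x i != 0.

Definition lin_indep4 (u w : 'I_4 -> K) :=
  forall a b : K, (forall i, a * u i + b * w i = 0) -> a = 0 /\ b = 0.

(* the curve {Q = F = 0} in P^3 is smooth: at each of its points the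
   gradients of Q and F are linearly independent (Jacobian criterion) *)
Definition smooth_QF (F : {mpoly K[4]}) :=
  forall x : 'I_4 -> K, nonzero4 x -> Qform.@[x] = 0 -> F.@[x] = 0 ->
    lin_indep4 (fun i => (Qform^`M(i)).@[x]) (fun i => (F^`M(i)).@[x]).

(* the restriction of F to the parametrised line s |-> p + s q, as a
   univariate polynomial in s *)
Definition restr (F : {mpoly K[4]}) (p q : 'I_4 -> K) : {poly K} :=
  mmap (@polyC K) (fun i => (p i)%:P + q i *: 'X) F.

Definition onL1 (x : 'I_4 -> K) := x (c4 0) = 0 /\ x (c4 1) = 0.
Definition onL2 (x : 'I_4 -> K) := x (c4 0) = 0 /\ x (c4 2) = 0.

(* the curve {Q = F = 0} is tangent with multiplicity 2 to the line L
   (contained in Q): F restricted to L has a zero of order exactly 2 at some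
   point p of L (q is any second point spanning L with p) *)
Definition tangent_mult2 (F : {mpoly K[4]}) (L : ('I_4 -> K) -> Prop) :=
  exists p q : 'I_4 -> K, [/\ L p, L q, lin_indep4 p q,
    restr F p q != 0 & mup 0 (restr F p q) = 2%N].

Definition e3 : 'I_4 -> K := fun i => if i == c4 3 then 1 else 0.

Definition inU0 (F : {mpoly K[4]}) :=
  [/\ F \is 3.-homog, smooth_QF F, F.@[e3] != 0,
      tangent_mult2 F onL1 & tangent_mult2 F onL2].

Definition proj4 (v : 'rV[K]_6) : 'I_4 -> K := fun i => v ord0 (@widen_ord 4 6 isT i).

Definition Yeq (F : {mpoly K[4]}) (t : K) (v : 'rV[K]_6) : K :=
  v ord0 (c6 4) ^+ 3 - F.@[proj4 v] + v ord0 (c6 5) * Qform.@[proj4 v]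
  + t * v ord0 (c6 0) * v ord0 (c6 5) ^+ 2.

Definition p0 : 'rV[K]_6 := \row_j (if j == c6 5 then 1 else 0).

Definition inC (F : {mpoly K[4]}) (i : nat) (v : 'rV[K]_6) :=
  [/\ v != 0, v ord0 (c6 0) = 0, v ord0 (c6 i) = 0, v ord0 (c6 5) = 0
    & v ord0 (c6 4) ^+ 3 = F.@[proj4 v]].

(* lines of P^5 are 2-dimensional row spaces of rank-2 2x6 matrices;
   a line lies in Y if every vector of it satisfies the equation of Y *)
Definition line_in_Y (F : {mpoly K[4]}) (t : K) (A : 'M[K]_(2, 6)) :=
  forall v : 'rV[K]_6, (v <= A)%MS -> Yeq F t v = 0.

End Defs.

(* Main.v *)
Require Import Defs.
From HB Require Import structures.
From mathcomp Require Import all_boot all_order all_algebra.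
From mathcomp Require Import mpoly.
From mathcomp Require Import ring.
Import Order.TTheory GRing.Theory Num.Theory.
Local Open Scope ring_scope.

Section Aux.
Variable K : closedFieldType.

Lemma c6_neq (i j : nat) : (i < 6)%N -> (j < 6)%N -> i != j -> c6 i != c6 j.
Proof.
move=> hi hj hij; apply/eqP => /(congr1 val); rewrite /c6 /= !inordK //.
by apply/eqP.
Qed.

Lemma widen_c4 (k : nat) : (k < 4)%N -> @widen_ord 4 6 isT (c4 k) = c6 k.
Proof.
move=> hk; apply: val_inj; rewrite /c4 /c6 /= !inordK //.
by apply: (leq_trans hk).
Qed.

Lemma widen_neq5 (i : 'I_4) : (@widen_ord 4 6 isT i == c6 5) = false.
Proof.
apply/negbTE/eqP => /(congr1 val); rewrite /c6 /= inordK //.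
move=> h; have := ltn_ord i; by rewrite h.
Qed.

Lemma proj4_c (v : 'rV[K]_6) k : (k < 4)%N -> proj4 v (c4 k) = v ord0 (c6 k).
Proof. by move=> hk; rewrite /proj4 widen_c4. Qed.

Lemma QformE (x : 'I_4 -> K) :
  (Qform K).@[x] = x (c4 0) * x (c4 3) - x (c4 1) * x (c4 2).
Proof. by rewrite /Qform mevalB !mevalM !mevalXU. Qed.

Lemma p0E j : p0 K ord0 j = if j == c6 5 then 1 else 0.
Proof. by rewrite /p0 mxE. Qed.

Lemma Yeq_shift (F : {mpoly K[4]}) t a (v : 'rV[K]_6) :
  v ord0 (c6 5) = 0 ->
  Yeq F t (a *: p0 K + v) =
  v ord0 (c6 4) ^+ 3 - F.@[proj4 v] + a * (Qform K).@[proj4 v]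
  + t * v ord0 (c6 0) * a ^+ 2.
Proof.
move=> h5.
have E j : (a *: p0 K + v) ord0 j = a * (if j == c6 5 then 1 else 0) + v ord0 j.
  by rewrite !mxE.
have PE (G : {mpoly K[4]}) : G.@[proj4 (a *: p0 K + v)] = G.@[proj4 v].
  by apply: meval_eq => i; rewrite /proj4 E widen_neq5 mulr0 add0r.
rewrite /Yeq !PE !E h5 eqxx.
rewrite (negbTE (@c6_neq 4 5 _ _ _)) // (negbTE (@c6_neq 0 5 _ _ _)) //.
rewrite !mulr0 !add0r mulr1 addr0; ring.
Qed.

Lemma meval_homog3 (F : {mpoly K[4]}) (b : K) (x : 'I_4 -> K) :
  F \is 3.-homog -> F.@[fun i => b * x i] = b ^+ 3 * F.@[x].
Proof.
move=> /dhomogP hF; rewrite !mevalE big_distrr /=; apply: eq_big_seq => m hm.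
rewrite mulrCA; congr (_ * _).
under eq_bigr do rewrite exprMn.
rewrite big_split /=; congr (_ * _).
rewrite -[3%N in RHS](hF m hm) /= mdegE.
by rewrite (big_morph (fun n => b ^+ n) (@exprD K b) (expr0 b)).
Qed.

End Aux.
Theorem lemma5p4 (K : closedFieldType) (hK : [pchar K] =i pred0)
    (F : {mpoly K[4]}) (t : K) (hF : inU0 F) (ht : t != 0)
    (A : 'M[K]_(2, 6)) (hA : \rank A = 2%N) :
  (line_in_Y F t A /\ (p0 K <= A)%MS) <->
  (exists2 i : nat, (i == 1%N) || (i == 2%N) &
     exists2 p : 'rV[K]_6, inC F i p & (A == col_mx (p0 K) p)%MS).
Proof.
have hom : F \is 3.-homog by case: hF.
have p0n0 : p0 K != 0.
  apply/eqP => /(congr1 (fun M : 'rV[K]_6 => M ord0 (c6 5))).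
  by rewrite p0E eqxx mxE => /eqP; rewrite oner_eq0.
have rp0 : \rank (p0 K) = 1%N by rewrite rank_rV p0n0.
split.
- case=> hY hp0.
  have [i hi] : exists i, ~~ (row i A <= p0 K)%MS.
    apply/existsP; rewrite -negb_forall; apply/negP => /forallP hall.
    have : (A <= p0 K)%MS by apply/row_subP.
    by move/mxrankS; rewrite hA rp0.
  set w := row i A.
  set v := w + (- w ord0 (c6 5)) *: p0 K.
  have v5 : v ord0 (c6 5) = 0 by rewrite !mxE eqxx mulr1 subrr.
  have vA : (v <= A)%MS by apply: addmx_sub; [exact: row_sub | exact: scalemx_sub].
  have vnp : ~~ (v <= p0 K)%MS.
    apply/negP => hv; move/negP: hi; apply.
    rewrite -/w. have -> : w = v + w ord0 (c6 5) *: p0 K by rewrite /v -addrA -scalerDl addNr scale0r addr0.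
    by apply: addmx_sub => //; apply: scalemx_sub.
  have key a : Yeq F t (a *: p0 K + v) = 0.
    by apply: hY; apply: addmx_sub => //; apply: scalemx_sub.
  have k0 := key 0; have k1 := key 1; have km := key (-1).
  rewrite Yeq_shift // in k0; rewrite Yeq_shift // in k1; rewrite Yeq_shift // in km.
  set c0 := _ - _ in k0 k1 km.
  set c1 := (Qform K).@[_] in k0 k1 km.
  have e0 : c0 = 0 by move: k0; rewrite !mul0r expr0n /= mulr0 !addr0.
  have two : (2%:R : K) != 0 by move/pcharf0P: hK => ->.
  have c2 : t * v ord0 (c6 0) = 0.
    have : 2%:R * (t * v ord0 (c6 0)) = 0.
      have -> : 2%:R * (t * v ord0 (c6 0)) = (c0 + 1 * c1 + t * v ord0 (c6 0) * 1 ^+ 2)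
        + (c0 + -1 * c1 + t * v ord0 (c6 0) * (-1) ^+ 2) - 2%:R * c0 by ring.
      by rewrite k1 km e0; ring.
    by move/eqP; rewrite mulf_eq0 (negbTE two) => /eqP.
  have v0 : v ord0 (c6 0) = 0 by move/eqP: c2; rewrite mulf_eq0 (negbTE ht) => /eqP.
  have e1 : c1 = 0 by move: k1; rewrite e0 c2 mul0r mul1r add0r addr0.
  move: e1; rewrite /c1 QformE !proj4_c // v0 mul0r sub0r => /eqP.
  rewrite oppr_eq0 mulf_eq0 => /orP hv12.
  have e4 : v ord0 (c6 4) ^+ 3 = F.@[proj4 v] by apply/eqP; rewrite -subr_eq0; apply/eqP.
  have vn0 : v != 0 by apply: contra vnp => /eqP ->; exact: sub0mx.
  have colA : (col_mx (p0 K) v <= A)%MS by rewrite col_mx_sub hp0 vA.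
  have rc : \rank (col_mx (p0 K) v) = 2%N.
    apply/eqP; rewrite eqn_leq rank_leq_row /=.
    have h1 : (p0 K <= col_mx (p0 K) v)%MS by rewrite -addsmxE addsmxSl.
    have := mxrank_leqif_sup h1; rewrite rp0 => /leqifP.
    by rewrite col_mx_sub submx_refl (negbTE vnp) /=.
  have Acol : (A <= col_mx (p0 K) v)%MS.
    by rewrite -(mxrank_leqif_sup colA).2 rc hA.
  case: hv12 => /eqP h.
  + exists 1%N => //; exists v; last by apply/andP; split.
    by split => //; rewrite -(proj4_c v) //.
  + exists 2%N => //; exists v; last by apply/andP; split.
    by split => //; rewrite -(proj4_c v) //.
- case=> j hj [p [pn0 pc0 pcj pc5 pc4]] /andP [Acol colA].
  move: colA; rewrite col_mx_sub => /andP [hp0 hpA].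
  split => // x /(submx_trans) /(_ Acol) /submxP [u ->].
  rewrite -(hsubmxK (u : 'M_(1, 1 + 1))) mul_row_col.
  rewrite [lsubmx _]mx11_scalar [rsubmx _]mx11_scalar !mul_scalar_mx.
  set a := _ 0 0; set b := _ 0 0.
  rewrite Yeq_shift; last by rewrite mxE pc5 mulr0.
  have PE : F.@[proj4 (b *: p)] = b ^+ 3 * F.@[proj4 p].
    rewrite -meval_homog3 //; apply: meval_eq => k; by rewrite /proj4 mxE.
  rewrite PE QformE !proj4_c // !mxE pc0 -pc4.
  case/orP: hj => /eqP hj; subst j; rewrite pcj; ring.
Qed.
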